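(* Let $\Omega$ be an infinite set, $\kappa$ a regular infinite cardinal with $\kappa\le|\Omega|$, $d$ a $\kappa$-uncrowded (respectively, uniformly $\kappa$-uncrowded) generalized metric on $\Omega$, and $G$ a subgroup of $S=\mathrm{Sym}(\Omega)$ all of whose elements are bounded with respect to $d$. Then for any subset $U\subseteq\mathrm{Sym}(\Omega)$ with $|U|<\kappa$, there exists a generalized metric $d'\le d$ on $\Omega$, again $\kappa$-uncrowded (respectively, uniformly $\kappa$-uncrowded), such that every element of $U$, and hence every element of $\langle G\cup U\rangle$, is bounded with respect to $d'$. Consequently, for subgroups of $S$, the property that there exists a (uniformly) $\kappa$-uncrowded generalized metric on $\Omega$ with respect to which every element of the subgroup is bounded is inherited by every subgroup $H$ with $H\preccurlyeq_\kappa G$, in particular by every $H$ with $H\approx_\kappa G$.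
   Context: $\mathrm{Sym}(\Omega)$ is the group of all permutations of $\Omega$, acting on the right. Let $P=\{r\in\mathbb R:r\ge0\}\cup\{\infty\}$. A generalized metric on $\Omega$ is a function $d:\Omega\times\Omega\to P$ satisfying the usual metric axioms (with values allowed to be $\infty$). $B_d(\alpha,r)=\{\beta:d(\alpha,\beta)<r\}$. $d$ is $\kappa$-uncrowded if $|B_d(\alpha,r)|<\kappa$ for all $\alpha\in\Omega$ and all $r<\infty$; uniformly $\kappa$-uncrowded if for every $r<\infty$ there is a cardinal $\lambda<\kappa$ with $|B_d(\alpha,r)|\le\lambda$ for all $\alpha$. $d'\le d$ means $d'(\alpha,\beta)\le d(\alpha,\beta)$ for all $\alpha,\beta$. For $g\in\mathrm{Sym}(\Omega)$, $\|g\|_d=\sup_{\alpha\in\Omega}d(\alpha,\alpha g)$, and $g$ is bounded if $\|g\|_d<\infty$. For subgroups $G_1,G_2\le S$, $G_1\preccurlyeq_\kappa G_2$ means there is $U\subseteq S$ with $|U|<\kappa$ and $G_1\le\langle G_2\cup U\rangle$; $G_1\approx_\kappa G_2$ means both $G_1\preccurlyeq_\kappa G_2$ and $G_2\preccurlyeq_\kappa G_1$. *)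

(* Defs.v *)
From HB Require Import structures.
From mathcomp Require Import all_boot all_order all_algebra.
From mathcomp Require Import boolp classical_sets reals ereal Rstruct.
Set Implicit Arguments. Unset Strict Implicit. Unset Printing Implicit Defensive.
Import Order.TTheory GRing.Theory Num.Theory.
Local Open Scope ring_scope.
Local Open Scope ereal_scope.
Local Open Scope classical_set_scope.

Notation RealR := Rdefinitions.R.

Definition card_le (A B : Type) : Prop := exists f : A -> B, injective f.
Definition card_lt (A B : Type) : Prop := card_le A B /\ ~ card_le B A.

Definition infinite_card (K : Type) : Prop := card_le nat K.

Definition regular_card (K : Type) : Prop :=
  forall (I : Type) (F : I -> set K),
    card_lt I K -> (forall i, card_lt {x : K | F i x} K) ->
    exists x : K, forall i, ~ F i x.

Definition gen_metric (Omega : Type) (d : Omega -> Omega -> \bar RealR) : Prop :=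
  [/\ (forall a b, 0 <= d a b),
      (forall a b, d a b = 0 <-> a = b),
      (forall a b, d a b = d b a) &
      (forall a b c, d a c <= d a b + d b c)].

Definition ball (Omega : Type) (d : Omega -> Omega -> \bar RealR)
  (a : Omega) (r : \bar RealR) : set Omega := [set b | d a b < r].

Definition uncrowded (Omega K : Type) (d : Omega -> Omega -> \bar RealR) : Prop :=
  forall (a : Omega) (r : RealR), card_lt {b : Omega | ball d a r%:E b} K.

Definition unif_uncrowded (Omega K : Type) (d : Omega -> Omega -> \bar RealR) : Prop :=
  forall r : RealR, exists L : Type, card_lt L K /\
    forall a : Omega, card_le {b : Omega | ball d a r%:E b} L.

Definition metric_le (Omega : Type) (d' d : Omega -> Omega -> \bar RealR) : Prop :=
  forall a b, d' a b <= d a b.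

(* Permutations acting on the right: alpha g is written (g alpha). *)
Definition perm_norm (Omega : Type) (d : Omega -> Omega -> \bar RealR)
  (g : Omega -> Omega) : \bar RealR :=
  ereal_sup [set d a (g a) | a in [set: Omega]].

Definition bounded_perm (Omega : Type) (d : Omega -> Omega -> \bar RealR)
  (g : Omega -> Omega) : Prop := perm_norm d g < +oo.

Definition in_Sym (Omega : Type) (A : set (Omega -> Omega)) : Prop :=
  forall g, A g -> bijective g.

Definition is_subgroup (Omega : Type) (G : set (Omega -> Omega)) : Prop :=
  [/\ in_Sym G, G id,
      (forall g h, G g -> G h -> G (h \o g)) &
      (forall g h, G g -> cancel g h -> cancel h g -> G h)].

Definition gen_subgroup (Omega : Type) (A : set (Omega -> Omega)) : set (Omega -> Omega) :=
  fun g => forall H : set (Omega -> Omega), is_subgroup H -> A `<=` H -> H g.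

Definition prec_kappa (Omega K : Type) (G1 G2 : set (Omega -> Omega)) : Prop :=
  exists U : set (Omega -> Omega),
    [/\ in_Sym U, card_lt {u : Omega -> Omega | U u} K &
        G1 `<=` gen_subgroup (G2 `|` U)].

Definition approx_kappa (Omega K : Type) (G1 G2 : set (Omega -> Omega)) : Prop :=
  prec_kappa K G1 G2 /\ prec_kappa K G2 G1.

Definition has_uncrowded_bd (Omega K : Type) (G : set (Omega -> Omega)) : Prop :=
  exists d : Omega -> Omega -> \bar RealR,
    [/\ gen_metric d, uncrowded K d & forall g, G g -> bounded_perm d g].

Definition has_unif_uncrowded_bd (Omega K : Type) (G : set (Omega -> Omega)) : Prop :=
  exists d : Omega -> Omega -> \bar RealR,
    [/\ gen_metric d, unif_uncrowded K d & forall g, G g -> bounded_perm d g].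

(* Main.v *)
Require Import Defs.
From HB Require Import structures.
From mathcomp Require Import all_boot all_order all_algebra.
From mathcomp Require Import boolp classical_sets reals ereal Rstruct.
Import Order.TTheory GRing.Theory Num.Theory.
Local Open Scope classical_set_scope.
Set Implicit Arguments. Unset Strict Implicit. Unset Printing Implicit Defensive.

Lemma NNPP (P : Prop) : ~ ~ P -> P.
Proof. by case: (pselect P) => // h /(_ h). Qed.

Lemma card_le_refl (A : Type) : card_le A A.
Proof. by exists id. Qed.

Lemma card_le_trans (A B C : Type) : card_le A B -> card_le B C -> card_le A C.
Proof. by move=> [f fi] [g gi]; exists (g \o f) => x y /gi /fi. Qed.

Lemma card_lt_le (A B K : Type) : card_lt A K -> card_le B A -> card_lt B K.
Proof.
move=> [AK nKA] BA; split; first exact: card_le_trans BA AK.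
by move=> KB; apply: nKA; exact: card_le_trans KB BA.
Qed.

Lemma card_comparable (X Y : Type) : card_le X Y \/ card_le Y X.
Proof.
pose P (G : set (X * Y)) :=
  (forall x y y', G (x, y) -> G (x, y') -> y = y') /\
  (forall x x' y, G (x, y) -> G (x', y) -> x = x').
have chP : forall F : set (set (X * Y)), F `<=` P -> total_on F subset ->
    P (\bigcup_(G in F) G).
  move=> F FP tot; split.
  - move=> x y y' [G1 F1 G1x] [G2 F2 G2x].
    case: (tot _ _ F1 F2) => S.
    + exact: (FP _ F2).1 _ _ _ (S _ G1x) G2x.
    + exact: (FP _ F1).1 _ _ _ G1x (S _ G2x).
  - move=> x x' y [G1 F1 G1x] [G2 F2 G2x].
    case: (tot _ _ F1 F2) => S.
    + exact: (FP _ F2).2 _ _ _ (S _ G1x) G2x.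
    + exact: (FP _ F1).2 _ _ _ G1x (S _ G2x).
have [A [[Af Ai] Amax]] := Zorn_bigcup chP.
case: (pselect (forall x, exists y, A (x, y))) => [tX|ntX].
  left; exists (fun x => projT1 (cid (tX x))) => x x' e.
  apply: (Ai _ _ (projT1 (cid (tX x)))); first exact: (projT2 (cid (tX x))).
  rewrite e; exact: (projT2 (cid (tX x'))).
case: (pselect (forall y, exists x, A (x, y))) => [tY|ntY].
  right; exists (fun y => projT1 (cid (tY y))) => y y' e.
  apply: (Af (projT1 (cid (tY y)))); first exact: (projT2 (cid (tY y))).
  rewrite e; exact: (projT2 (cid (tY y'))).
have [x0 hx0] : exists x0, forall y, ~ A (x0, y).
  apply: NNPP => H; apply: ntX => x; apply: NNPP => H2; apply: H; exists x.
  by move=> y Ay; apply: H2; exists y.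
have [y0 hy0] : exists y0, forall x, ~ A (x, y0).
  apply: NNPP => H; apply: ntY => y; apply: NNPP => H2; apply: H; exists y.
  by move=> x Ax; apply: H2; exists x.
exfalso; apply: (Amax (A `|` [set (x0, y0)])).
  split; first by move=> p Ap; left.
  by move=> /(_ (x0, y0) (or_intror erefl)) /hx0.
split.
- move=> x y y' [h1|h1] [h2|h2].
  + exact: Af h1 h2.
  + by move: h2 => [] ? ?; subst; case: (hx0 _ h1).
  + by move: h1 => [] ? ?; subst; case: (hx0 _ h2).
  + by move: h1 h2 => [] ? ? [] ? ?; subst.
- move=> x x' y [h1|h1] [h2|h2].
  + exact: Ai h1 h2.
  + by move: h2 => [] ? ?; subst; case: (hy0 _ h1).
  + by move: h1 => [] ? ?; subst; case: (hy0 _ h2).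
  + by move: h1 h2 => [] ? ? [] ? ?; subst.
Qed.

Definition Dm (K : Type) (X : set ((K * K) * K)) (a : K) :=
  exists b z, X ((a, b), z).

Definition valid (K : Type) (X : set ((K * K) * K)) :=
  [/\ (forall p z z', X (p, z) -> X (p, z') -> z = z'),
      (forall p p' z, X (p, z) -> X (p', z) -> p = p'),
      (forall a b, (exists z, X ((a, b), z)) <-> Dm X a /\ Dm X b) &
      (forall p z, X (p, z) -> Dm X z)].

Lemma Dm_mono (K : Type) (X Y : set ((K * K) * K)) a :
  X `<=` Y -> Dm X a -> Dm Y a.
Proof. by move=> XY [b [z h]]; exists b, z; apply: XY. Qed.

Lemma valid_chain (K : Type) (F : set (set ((K * K) * K))) :
  (forall X, F X -> valid X) -> total_on F subset ->
  valid (\bigcup_(X in F) X).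
Proof.
move=> FP tot; split.
- move=> p z z' [G1 F1 G1x] [G2 F2 G2x].
  case: (tot _ _ F1 F2) => S.
  + by case: (FP _ F2) => f _ _ _; apply: f (S _ G1x) G2x.
  + by case: (FP _ F1) => f _ _ _; apply: f G1x (S _ G2x).
- move=> p p' z [G1 F1 G1x] [G2 F2 G2x].
  case: (tot _ _ F1 F2) => S.
  + by case: (FP _ F2) => _ f _ _; apply: f (S _ G1x) G2x.
  + by case: (FP _ F1) => _ f _ _; apply: f G1x (S _ G2x).
- move=> a b; split.
  + move=> [z [X FX Xz]]; case: (FP _ FX) => _ _ hd _.
    have [ha hb] := (hd a b).1 (ex_intro _ z Xz).
    have sub : X `<=` \bigcup_(X in F) X by move=> t Xt; exists X.
    by split; apply: Dm_mono sub _.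
  + move=> [[b1 [z1 [X1 F1 X1a]]] [b2 [z2 [X2 F2 X2b]]]].
    have h1 : Dm X1 a by exists b1, z1.
    have h2 : Dm X2 b by exists b2, z2.
    case: (tot _ _ F1 F2) => S.
    * case: (FP _ F2) => _ _ hd _.
      have [z Xz] := (hd a b).2 (conj (Dm_mono S h1) h2).
      by exists z, X2.
    * case: (FP _ F1) => _ _ hd _.
      have [z Xz] := (hd a b).2 (conj h1 (Dm_mono S h2)).
      by exists z, X1.
- move=> p z [X FX Xz]; case: (FP _ FX) => _ _ _ hr.
  by apply: Dm_mono (hr _ _ Xz) => t Xt; exists X.
Qed.

Lemma valid0 (K : Type) : valid (@set0 ((K * K) * K)).
Proof.
split => //.
move=> a b; split; first by case.
by move=> [[? [? []]] _].
Qed.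

Definition G0 (K : Type) (e : nat -> K) : set ((K * K) * K) :=
  [set t | exists i j, t = ((e i, e j), e (pickle (i, j)))].

Lemma DmG0 (K : Type) (e : nat -> K) a : Dm (G0 e) a <-> exists i, a = e i.
Proof.
split.
- by move=> [b [z [i [j [] -> _ _]]]]; exists i.
- by move=> [i ->]; exists (e 0), (e (pickle (i, 0))), i, 0.
Qed.

Lemma validG0 (K : Type) (e : nat -> K) : injective e -> valid (G0 e).
Proof.
move=> einj; split.
- move=> p z z' [i [j [] ? ?]] [i' [j' [] E ?]]; subst.
  by case: E => /einj -> /einj ->.
- move=> p p' z [i [j [] ? ?]] [i' [j' [] ? E]]; subst.
  by move/einj/(pcan_inj pickleK): E => [] -> ->.
- move=> a b; split.
  + move=> [z [i [j [] -> -> _]]]; split; apply/DmG0; [exists i|exists j] => //.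
  + move=> [/DmG0 [i ->] /DmG0 [j ->]]; exists (e (pickle (i, j))), i, j => //.
- by move=> p z [i [j [] _ ->]]; apply/DmG0; exists (pickle (i, j)).
Qed.

Definition fA (K : Type) (A : set ((K * K) * K)) (a b : K) : K :=
  match pselect (exists z, A ((a, b), z)) with
  | left h => projT1 (cid h)
  | right _ => a
  end.

Lemma fA_spec (K : Type) (A : set ((K * K) * K)) a b :
  (exists z, A ((a, b), z)) -> A ((a, b), fA A a b).
Proof. by rewrite /fA; case: pselect => // h _; exact: (projT2 (cid h)). Qed.

Section FA.
Context (K : Type) (A : set ((K * K) * K)) (hA : valid A).

Lemma fP a b : Dm A a -> Dm A b -> A ((a, b), fA A a b).
Proof. by case: hA => _ _ hd _ ha hb; apply: fA_spec; apply/hd. Qed.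

Lemma fD a b : Dm A a -> Dm A b -> Dm A (fA A a b).
Proof. by case: hA => _ _ _ hr ha hb; apply: hr (fP ha hb). Qed.

Lemma finj a b a' b' : Dm A a -> Dm A b -> Dm A a' -> Dm A b' ->
  fA A a b = fA A a' b' -> a = a' /\ b = b'.
Proof.
move=> ha hb ha' hb' e; case: hA => _ hi _ _.
have := hi _ _ _ (fP ha hb); rewrite e => /(_ _ (fP ha' hb')).
by case=> -> ->.
Qed.
End FA.

Section Extend.
Context (K : Type) (A : set ((K * K) * K)) (hA : valid A).
Context (c0 c1 c2 : K) (Dc0 : Dm A c0) (Dc1 : Dm A c1) (Dc2 : Dm A c2).
Context (n01 : c0 <> c1) (n02 : c0 <> c2) (n12 : c1 <> c2).
Context (hh : K -> K) (hhD : forall x, Dm A x -> ~ Dm A (hh x))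
  (hhinj : forall x y, Dm A x -> Dm A y -> hh x = hh y -> x = y).

Let D := Dm A.
Let f := fA A.
Let pre a a0 := D a0 /\ (a = a0 \/ a = hh a0).
Let cidx a b := match pselect (D a) with
  | left _ => c0
  | right _ => match pselect (D b) with left _ => c1 | right _ => c2 end
  end.
Let N : set ((K * K) * K) := fun t =>
  ~ (D t.1.1 /\ D t.1.2) /\ exists a0 b0, [/\ pre t.1.1 a0, pre t.1.2 b0 &
     t.2 = hh (f (f a0 b0) (cidx t.1.1 t.1.2))].
Let A' := A `|` N.

Let cidxD a b : D (cidx a b).
Proof. by rewrite /cidx; case: (pselect (D a)) => _ //; case: (pselect (D b)). Qed.

Let preD a a0 : pre a a0 -> D a -> a = a0.
Proof. by move=> [h0 [-> // | -> Dh]]; case: (hhD h0 Dh). Qed.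

Let preND a a0 : pre a a0 -> ~ D a -> a = hh a0.
Proof. by move=> [h0 [-> Dn | -> //]]; case: Dn. Qed.

Let preU a a0 a1 : pre a a0 -> pre a a1 -> a0 = a1.
Proof.
move=> p0 p1; case: (pselect (D a)) => Da.
  by rewrite -(preD p0 Da) -(preD p1 Da).
by apply: hhinj p0.1 p1.1 _; rewrite -(preND p0 Da) -(preND p1 Da).
Qed.

Let ND a b z : N ((a, b), z) -> ~ D z.
Proof.
move=> [_ [a0 [b0 [[h0 _] [h1 _] /= ->]]]]; apply: hhD.
by apply: fD => //; [apply: fD | apply: cidxD].
Qed.

Let img a b : (exists a0, pre a a0) -> (exists b0, pre b b0) ->
  exists z, A' ((a, b), z).
Proof.
move=> [a0 pa] [b0 pb]; case: (pselect (D a /\ D b)) => [[Da Db]|nD].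
  by exists (f a b); left; apply: fP.
exists (hh (f (f a0 b0) (cidx a b))); right; split => //.
by exists a0, b0.
Qed.

Let Dm_pre a : Dm A' a -> exists a0, pre a a0.
Proof.
move=> [b [z [Az|[_ [a0 [b0 [pa _ _]]]]]]]; last by exists a0.
exists a; split; last by left.
by case: hA => _ _ hd _; case: ((hd a b).1 (ex_intro _ z Az)).
Qed.

Let pre_Dm a a0 : pre a a0 -> Dm A' a.
Proof.
by move=> pa; have [z hz] := img (ex_intro _ a0 pa) (ex_intro _ a0 pa); exists a, z.
Qed.

Let cidx_eq a b a' b' : ~ (D a /\ D b) -> ~ (D a' /\ D b') ->
  cidx a b = cidx a' b' -> (D a <-> D a') /\ (D b <-> D b').
Proof.
rewrite /cidx => nab nab'.
case: (pselect (D a)) => Da; case: (pselect (D a')) => Da';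
  try case: (pselect (D b)) => Db;
  try case: (pselect (D b')) => Db'; move=> e; try by [].
all: try by (exfalso; first [exact: n01 e | exact: n02 e | exact: n12 e |
   exact: n01 (esym e) | exact: n02 (esym e) | exact: n12 (esym e)]).
all: split; split => h; try by [].
all: try by (exfalso; first [exact: nab (conj Da h) | exact: nab' (conj Da' h)]).
Qed.

Lemma extend_valid : valid A'.
Proof.
case: hA => Af Ai Ad Ar; split.
- move=> [a b] z z' [h|h] [h'|h'].
  + exact: Af h h'.
  + by case: h'.1; apply/Ad; exists z.
  + by case: h.1; apply/Ad; exists z'.
  + move: h h' => [_ [a0 [b0 [pa pb /= ->]]]] [_ [a1 [b1 [pa' pb' /= ->]]]].
    by rewrite (preU pa pa') (preU pb pb').
- move=> [a b] [a' b'] z [h|h] [h'|h'].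
  + exact: Ai h h'.
  + by case: (ND h'); apply: Ar h.
  + by case: (ND h); apply: Ar h'.
  + move: (h) (h') => [nab [a0 [b0 [pa pb ez]]]] [nab' [a1 [b1 [pa' pb' ez']]]] /=.
    simpl in *.
    have Da0 := pa.1; have Db0 := pb.1; have Da1 := pa'.1; have Db1 := pb'.1.
    have e1 : f (f a0 b0) (cidx a b) = f (f a1 b1) (cidx a' b').
      apply: hhinj; try apply: fD => //; try apply: fD => //; try apply: cidxD.
      by rewrite -ez -ez'.
    have [e2 e3] := finj hA (fD hA Da0 Db0) (cidxD a b) (fD hA Da1 Db1) (cidxD a' b') e1.
    have [e4 e5] := finj hA Da0 Db0 Da1 Db1 e2.
    subst a1 b1.
    have [sa sb] := cidx_eq nab nab' e3.
    have ea : a = a'.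
      case: (pselect (D a)) => Da.
        by rewrite (preD pa Da) (preD pa' (sa.1 Da)).
      have Da' : ~ D a' by move=> /sa.2.
      by rewrite (preND pa Da) (preND pa' Da').
    have eb : b = b'.
      case: (pselect (D b)) => Db.
        by rewrite (preD pb Db) (preD pb' (sb.1 Db)).
      have Db' : ~ D b' by move=> /sb.2.
      by rewrite (preND pb Db) (preND pb' Db').
    by rewrite ea eb.
- move=> a b; split.
  + move=> [z hz].
    have [a0 pa] : exists a0, pre a a0.
      by apply: Dm_pre; exists b, z.
    have [b0 pb] : exists b0, pre b b0.
      case: hz => [Az|[_ [a1 [b1 [_ pb _]]]]]; last by exists b1.
      exists b; split; last by left.
      by case: ((Ad a b).1 (ex_intro _ z Az)).
    by split; [apply: pre_Dm pa | apply: pre_Dm pb].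
  + by move=> [/Dm_pre ha /Dm_pre hb]; apply: img.
- move=> p z [h|h].
  + by apply: (pre_Dm (a0 := z)); split; [apply: Ar h | left].
  + case: h => _ [a0 [b0 [[h0 _] [h1 _] /= ->]]].
    apply: (pre_Dm (a0 := f (f a0 b0) (cidx p.1 p.2))); split; last by right.
    by apply: fD => //; [apply: fD | apply: cidxD].
Qed.

Lemma extend_proper : A `<` A'.
Proof.
split; first by move=> t At; left.
move=> sub.
have nD : ~ D (hh c0) := hhD Dc0.
have pc : pre (hh c0) c0 by split => //; right.
have [z hz] := img (ex_intro _ c0 pc) (ex_intro _ c0 pc).
have := sub _ hz => Az.
case: hA => _ _ Ad _.
by case: ((Ad _ _).1 (ex_intro _ z Az)).
Qed.

End Extend.

Lemma hessenberg (K : Type) : card_le nat K -> card_le (K * K) K.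
Proof.
move=> [e einj].
pose P (X : set ((K * K) * K)) := valid X /\ (X = set0 \/ G0 e `<=` X).
have chP : forall F, F `<=` P -> total_on F subset -> P (\bigcup_(X in F) X).
  move=> F FP tot; split; first by apply: valid_chain => // X /FP [].
  case: (pselect (exists2 X, F X & X <> set0)) => [[X FX X0]|nX].
    right; case: (FP _ FX) => _ [//|sub] t /sub Xt; by exists X.
  left; apply/seteqP; split => t // [X FX Xt].
  case: (pselect (X = set0)) => [X0|X0]; first by rewrite X0 in Xt.
  by case: nX; exists X.
have [A [[hA A0] Amax]] := Zorn_bigcup chP.
have G0A : G0 e `<=` A.
  case: A0 => // A_0; exfalso; apply: (Amax (G0 e)).
    rewrite A_0; split => // /(_ ((e 0, e 0), e (pickle (0, 0)))).
    by apply; exists 0, 0.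
  by split; [apply: validG0 | right].
have De i : Dm A (e i).
  by exists (e i), (e (pickle (i, i))); apply: G0A; exists i, i.
have n01 : e 0 <> e 1 by move/einj.
have n02 : e 0 <> e 2 by move/einj.
have n12 : e 1 <> e 2 by move/einj.
case: (card_comparable {x | Dm A x} {y | ~ Dm A y}) => [[h hinj]|[g ginj]].
  pose hh x := match pselect (Dm A x) with
    | left Dx => sval (h (exist _ x Dx)) | right _ => x end.
  have hhD x : Dm A x -> ~ Dm A (hh x).
    rewrite /hh; case: (pselect (Dm A x)) => // Dx _.
    exact: (svalP (h (exist _ x Dx))).
  have hhinj x y : Dm A x -> Dm A y -> hh x = hh y -> x = y.
    rewrite /hh; case: (pselect (Dm A x)) => // Dx _;
      case: (pselect (Dm A y)) => // Dy _.
    by move=> /(eq_sig_hprop (fun _ _ _ => Prop_irrelevance _ _)) /hinj [].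
  exfalso; apply: (Amax _ (extend_proper hA (e 1) (e 2) (De 0) hhD)).
  split; first exact: (extend_valid hA (De 0) (De 1) (De 2) n01 n02 n12 hhD hhinj).
  right; apply: subset_trans G0A _; by move=> t At; left.
pose phi k := match pselect (Dm A k) with
  | left _ => fA A k (e 0)
  | right nk => fA A (sval (g (exist _ k nk))) (e 1) end.
have phiD k : Dm A (phi k).
  rewrite /phi; case: (pselect (Dm A k)) => Dk; apply: fD => //.
  exact: (svalP (g (exist _ k Dk))).
have phiinj : injective phi.
  move=> k k'; rewrite /phi.
  case: (pselect (Dm A k)) => Dk; case: (pselect (Dm A k')) => Dk' e1.
  - by have [] := finj hA Dk (De 0) Dk' (De 0) e1.
  - have [_ ] := finj hA Dk (De 0) (svalP (g (exist _ k' Dk'))) (De 1) e1.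
    by move/einj.
  - have [_ ] := finj hA (svalP (g (exist _ k Dk))) (De 1) Dk' (De 0) e1.
    by move/einj.
  - have [e2 _] := finj hA (svalP (g (exist _ k Dk))) (De 1)
       (svalP (g (exist _ k' Dk'))) (De 1) e1.
    by move/(eq_sig_hprop (fun _ _ _ => Prop_irrelevance _ _))/ginj: e2 => [].
exists (fun p => fA A (phi p.1) (phi p.2)) => [[k1 k2] [k1' k2']] /= e1.
by have [/phiinj -> /phiinj ->] := finj hA (phiD k1) (phiD k2) (phiD k1') (phiD k2') e1.
Qed.

Lemma sig_eq (X : Type) (P : X -> Prop) (u v : {x | P x}) : sval u = sval v -> u = v.
Proof. exact: (eq_sig_hprop (fun _ _ _ => Prop_irrelevance _ _)). Qed.

Lemma inj_fun (X L : Type) (P : X -> Prop) (l0 : L) :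
  card_le {x | P x} L ->
  exists g : X -> L, forall x y, P x -> P y -> g x = g y -> x = y.
Proof.
move=> [f finj].
exists (fun x => match pselect (P x) with left h => f (exist _ x h) | right _ => l0 end).
move=> x y Px Py; case: (pselect (P x)) => // hx; case: (pselect (P y)) => // hy.
by move/finj/(f_equal sval).
Qed.

Lemma card_le_union (I X L : Type) (F : I -> X -> Prop) :
  (forall i, card_le {x | F i x} L) -> card_le {x | exists i, F i x} (I * L).
Proof.
move=> hF; case: (pselect (inhabited L)) => [[l0]|nL]; last first.
  have emp : forall x : {x | exists i, F i x}, False.
    move=> [x [i Fi]]; case: (hF i) => f _; apply: nL; exact: inhabits (f (exist _ x Fi)).
  by exists (fun x => False_rect _ (emp x)) => x; case: (emp x).
pose g i := projT1 (cid (inj_fun l0 (hF i))).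
have gP i : forall x y, F i x -> F i y -> g i x = g i y -> x = y.
  exact: (projT2 (cid (inj_fun l0 (hF i)))).
pose ix (x : {x | exists i, F i x}) := projT1 (cid (svalP x)).
have ixP x : F (ix x) (sval x) by exact: (projT2 (cid (svalP x))).
exists (fun x => (ix x, g (ix x) (sval x))) => x y [] e1.
move: (ixP y); rewrite -e1 => Fy e2.
by apply: sig_eq; apply: (gP (ix x)) => //; exact: ixP.
Qed.

Lemma nat_not_bool (f : nat -> bool) : ~ injective f.
Proof.
move=> fi; have h01 : f 0 <> f 1 by move/fi.
have h02 : f 0 <> f 2 by move/fi.
have h12 : f 1 <> f 2 by move/fi.
by move: h01 h02 h12; case: (f 0); case: (f 1); case: (f 2).
Qed.

Lemma bool_lt (K : Type) : infinite_card K -> card_lt bool K.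
Proof.
move=> [e ei]; split.
  by exists (fun b : bool => e b) => x y /ei; case: x; case: y.
by move=> [f fi]; apply: (@nat_not_bool (f \o e)) => x y /fi /ei.
Qed.

Lemma union_lt (K I X : Type) (F : I -> X -> Prop) :
  infinite_card K -> regular_card K -> card_lt I K ->
  (forall i, card_lt {x | F i x} K) -> card_lt {x | exists i, F i x} K.
Proof.
move=> Kinf Kreg IK FK; split.
  apply: card_le_trans (card_le_union (fun i => (FK i).1)) _.
  apply: card_le_trans (hessenberg Kinf).
  case: IK => [[h hi] _]; exists (fun p => (h p.1, p.2)) => [[a b] [a' b']] [] /hi -> -> //.
move=> [f fi].
pose F' i := [set k | F i (sval (f k))].
have F'K i : card_lt {k | F' i k} K.
  apply: card_lt_le (FK i) _.
  exists (fun k => exist (F i) (sval (f (sval k))) (svalP k)) => k k' /(f_equal sval) /= e.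
  by apply: sig_eq; apply: fi; apply: sig_eq.
have [k hk] := Kreg _ F' IK F'K.
by case: (svalP (f k)) => i; apply: hk.
Qed.

Lemma prod_lt (K A B : Type) : infinite_card K -> regular_card K ->
  card_lt A K -> card_lt B K -> card_lt (A * B) K.
Proof.
move=> Kinf Kreg AK BK.
have U := @union_lt K A (A * B) (fun a p => p.1 = a) Kinf Kreg AK.
apply: card_lt_le (U _) _.
  move=> a; apply: card_lt_le BK _.
  exists (fun p => (sval p).2) => [[[x y] /= hx] [[x' y'] /= hx']] /= ey.
  by apply: sig_eq => /=; rewrite hx hx' ey.
exists (fun p => exist (fun p => exists a, p.1 = a) p (ex_intro _ p.1 erefl)).
by move=> p q /(f_equal sval).
Qed.

Lemma option_lt (K A : Type) : infinite_card K -> regular_card K ->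
  card_lt A K -> card_lt (option A) K.
Proof.
move=> Kinf Kreg AK.
case: (pselect (inhabited A)) => [[a0]|nA].
  apply: card_lt_le (prod_lt Kinf Kreg AK (bool_lt Kinf)) _.
  exists (fun o => match o with Some a => (a, true) | None => (a0, false) end).
  by move=> [x|] [y|] //= [] ->.
apply: card_lt_le (bool_lt Kinf) _.
exists (fun o => if o is Some _ then true else false).
move=> [x|] [y|] //; by case: nA; constructor.
Qed.

From mathcomp Require Import ring lra.
Local Open Scope ereal_scope.

Definition Urel (Omega : Type) (U : set (Omega -> Omega)) (x y : Omega) :=
  exists u, U u /\ (y = u x \/ x = u y).

Inductive path (Omega : Type) (d : Omega -> Omega -> \bar RealR)
  (U : set (Omega -> Omega)) : Omega -> Omega -> \bar RealR -> Prop :=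
| p_nil x : path d U x x 0
| p_d x y b s : path d U y b s -> path d U x b (d x y + s)
| p_u x y b s : Urel U x y -> path d U y b s -> path d U x b (1 + s).

Definition dU (Omega : Type) (d : Omega -> Omega -> \bar RealR)
  (U : set (Omega -> Omega)) (a b : Omega) : \bar RealR :=
  ereal_inf [set s | path d U a b s].

Section Metric.
Context (Omega : Type) (d : Omega -> Omega -> \bar RealR) (dm : gen_metric d)
  (U : set (Omega -> Omega)).

Let d0 a b : 0 <= d a b. Proof. by case: dm. Qed.
Let dE a b : d a b = 0 <-> a = b. Proof. by case: dm. Qed.
Let dS a b : d a b = d b a. Proof. by case: dm. Qed.
Let dT a b c : d a c <= d a b + d b c. Proof. by case: dm. Qed.
Let daa a : d a a = 0. Proof. exact/dE. Qed.

Lemma path_ge0 a b s : path d U a b s -> 0 <= s.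
Proof.
elim=> // x y b' s' _ h; [exact: adde_ge0 | exact: adde_ge0].
Qed.

Lemma path_cat0 a b s : path d U a b s -> forall c t, path d U b c t -> path d U a c (s + t).
Proof.
elim=> [x|x y b' s' _ IH|x y b' s' xy _ IH] c t q.
- by rewrite add0e.
- by rewrite -addeA; apply: p_d; exact: IH q.
- have -> : 1 + s' + t = 1 + (s' + t) by rewrite addeA.
  exact: (p_u xy (IH _ _ q)).
Qed.

Lemma path_cat a b c s t : path d U a b s -> path d U b c t -> path d U a c (s + t).
Proof. by move=> p q; apply: path_cat0 p _ _ q. Qed.

Lemma Urel_sym x y : Urel U x y -> Urel U y x.
Proof. by move=> [u [Uu [h|h]]]; exists u; split => //; [right|left]. Qed.

Lemma path_rev a b s : path d U a b s -> path d U b a s.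
Proof.
elim=> [x|x y b' s' _ IH|x y b' s' xy _ IH].
- exact: p_nil.
- have := path_cat IH (p_d y (p_nil d U x)).
  by rewrite adde0 addeC dS.
- have := path_cat IH (p_u (Urel_sym xy) (p_nil d U x)).
  by rewrite adde0 addeC.
Qed.

Lemma path_min a b s : path d U a b s -> 1 <= s \/ d a b <= s.
Proof.
elim=> [x|x y b' s' p [IH|IH]|x y b' s' xy p _].
- by right; rewrite daa.
- by left; apply: le_trans IH _; rewrite leeDr.
- right; apply: le_trans (dT x y b') _; exact: leeD.
- by left; rewrite leeDl // (path_ge0 p).
Qed.

Lemma dU_ge0 a b : 0 <= dU d U a b.
Proof. by apply/ereal_infP => s; apply: path_ge0. Qed.

Lemma dU_le_path a b s : path d U a b s -> dU d U a b <= s.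
Proof. by move=> p; apply: ereal_inf_lbound. Qed.

Lemma dU_le a b : dU d U a b <= d a b.
Proof. by have := dU_le_path (@p_d _ d U a b b 0 (p_nil d U b)); rewrite adde0. Qed.

Lemma dU_sym a b : dU d U a b = dU d U b a.
Proof.
rewrite /dU; congr ereal_inf; apply/seteqP; split => s; exact: path_rev.
Qed.

Lemma dU_E a b : dU d U a b = 0 <-> a = b.
Proof.
split; last first.
  move=> ->; apply: le_anti; apply/andP; split; last exact: dU_ge0.
  exact: dU_le_path (p_nil _ _ _).
move=> h; apply: NNPP => nab.
have dpos : 0 < d a b by rewrite lt_neqAle d0 andbT; apply/eqP => /esym /dE.
have : dU d U a b < Order.min 1 (d a b) by rewrite h lt_min dpos lte01.
case/ereal_inf_lt => s p; rewrite lt_min => /andP [s1 s2].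
by case: (path_min p) => h'; [move: s1 | move: s2]; rewrite ltNge h'.
Qed.

Lemma dU_tri a b c : dU d U a c <= dU d U a b + dU d U b c.
Proof.
have ge0ab := dU_ge0 a b; have ge0bc := dU_ge0 b c.
case: (pselect (dU d U a b = +oo)) => [->|nab].
  by rewrite addye ?leey // gt_eqF // (lt_le_trans _ ge0bc) // ltNy0.
case: (pselect (dU d U b c = +oo)) => [->|nbc].
  by rewrite addey ?leey // gt_eqF // (lt_le_trans _ ge0ab) // ltNy0.
have fab : dU d U a b \is a fin_num by rewrite ge0_fin_numE // lt_neqAle leey andbT; apply/eqP.
have fbc : dU d U b c \is a fin_num by rewrite ge0_fin_numE // lt_neqAle leey andbT; apply/eqP.
apply/lee_addgt0Pr => e e0.
have e20 : (0 < e / 2)%R by lra.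
have [s ps hs] := lb_ereal_inf_adherent e20 fab.
have [t pt ht] := lb_ereal_inf_adherent e20 fbc.
apply: le_trans (dU_le_path (path_cat ps pt)) _.
rewrite -/(dU d U a b) in hs; rewrite -/(dU d U b c) in ht.
rewrite -(fineK fab) -(fineK fbc) in hs ht *.
apply: ltW; apply: lt_le_trans (lteD hs ht) _.
by rewrite -!EFinD lee_fin; lra.
Qed.

Lemma dU_metric : gen_metric (dU d U).
Proof.
split; [exact: dU_ge0 | exact: dU_E | exact: dU_sym | exact: dU_tri].
Qed.

End Metric.

Lemma pn_le (Omega : Type) (dl : Omega -> Omega -> \bar RealR) g x :
  (forall a, dl a (g a) <= x) -> perm_norm dl g <= x.
Proof. by move=> h; apply/ereal_supP => _ [a _ <-]. Qed.

Lemma pn_ge (Omega : Type) (dl : Omega -> Omega -> \bar RealR) g a :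
  dl a (g a) <= perm_norm dl g.
Proof. by apply: ereal_sup_ubound; exists a. Qed.

Lemma bounded_le (Omega : Type) (dl' dl : Omega -> Omega -> \bar RealR) g :
  metric_le dl' dl -> bounded_perm dl g -> bounded_perm dl' g.
Proof.
move=> le h; apply: le_lt_trans h.
by apply: pn_le => a; apply: le_trans (le a (g a)) (pn_ge _ _ _).
Qed.

Lemma bounded_subgroup (Omega : Type) (dl : Omega -> Omega -> \bar RealR) :
  gen_metric dl -> is_subgroup (fun g : Omega -> Omega => bijective g /\ bounded_perm dl g).
Proof.
case=> d0 dE dS dT; split.
- by move=> g [].
- split; first by exists id.
  apply: (@le_lt_trans _ _ 0); last exact: ltry.
  by apply: pn_le => a; rewrite (proj2 (dE a a) erefl).
- move=> g h [bg pg] [bh ph]; split; first exact: bij_comp.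
  apply: (@le_lt_trans _ _ (perm_norm dl g + perm_norm dl h)); last exact: lte_add_pinfty.
  apply: pn_le => a; apply: le_trans (dT a (g a) _) _.
  by apply: leeD; [apply: pn_ge | apply: (pn_ge dl h (g a))].
- move=> g h [bg pg] gh hg; split; first exact: (Bijective hg gh).
  apply: le_lt_trans pg; apply: pn_le => a.
  by rewrite -{1}[a]hg dS; apply: pn_ge.
Qed.

Fixpoint Rn (Omega : Type) (d : Omega -> Omega -> \bar RealR) (U : set (Omega -> Omega))
  (r : RealR) (n : nat) (rho : RealR) (x b : Omega) : Prop :=
  match n with
  | 0 => d x b < rho%:E
  | m.+1 => exists y z, [/\ d x y < rho%:E, z = y \/ Urel U y z & Rn d U r m r z b]
  end.

Section Unc.
Context (Omega : Type) (d : Omega -> Omega -> \bar RealR) (dm : gen_metric d)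
  (U : set (Omega -> Omega)).

Let d0 a b : 0 <= d a b. Proof. by case: dm. Qed.
Let dE a b : d a b = 0 <-> a = b. Proof. by case: dm. Qed.
Let dT a b c : d a c <= d a b + d b c. Proof. by case: dm. Qed.
Let daa a : d a a = 0. Proof. exact/dE. Qed.

Let step x y w (c rho : RealR) : d x y = c%:E -> d y w < (rho - c)%:E -> d x w < rho%:E.
Proof.
move=> exy h; apply: le_lt_trans (dT x y w) _; rewrite exy.
have -> : rho = (c + (rho - c))%R by rewrite addrC subrK.
by rewrite EFinD lteD2lE.
Qed.

Lemma Rn_shift r n (rho c : RealR) x y b :
  d x y = c%:E -> Rn d U r n (rho - c)%R y b -> Rn d U r n rho x b.
Proof.
case: n => [|n] /= exy.
  exact: step exy.
by move=> [y1 [z [h1 h2 h3]]]; exists y1, z; split => //; exact: step exy h1.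
Qed.

Lemma path_Rn r x b s : path d U x b s -> forall rho : RealR, s < rho%:E -> (rho <= r)%R ->
  exists n : nat, (n%:R)%:E <= s /\ Rn d U r n rho x b.
Proof.
elim=> [y|y y' b' s' p IH|y y' b' s' yy p IH] rho srho rr.
- by exists 0%N; split => //=; rewrite daa.
- have s0 := path_ge0 dm p.
  have fin : d y y' \is a fin_num.
    rewrite ge0_fin_numE //; apply: le_lt_trans (leeDl _ s0) _.
    exact: lt_trans srho (ltry _).
  set c := fine (d y y').
  have ec : d y y' = c%:E by rewrite fineK.
  have c0 : (0 <= c)%R by rewrite -lee_fin -ec.
  have s2 : s' < (rho - c)%:E.
    by rewrite -(@lteD2lE _ c%:E) // -EFinD [(c + _)%R]addrC subrK -ec.
  have [n [hn hR]] := IH (rho - c)%R s2 ltac:(lra).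
  exists n; split; first by apply: le_trans hn _; rewrite leeDr.
  exact: Rn_shift ec hR.
- have s0 := path_ge0 dm p.
  have s2 : s' < r%:E.
    apply: lt_le_trans (_ : s' < (rho - 1)%:E) _; last by rewrite lee_fin; lra.
    by rewrite -(@lteD2lE _ 1%:E) // -EFinD [(1 + _)%R]addrC subrK.
  have [n [hn hR]] := IH r s2 (lexx r).
  exists n.+1; split.
    by rewrite -addn1 natrD addrC EFinD; apply: leeD.
  exists y, y'; split => //; last by right.
  rewrite daa; apply: le_lt_trans srho; rewrite -[0]adde0; exact: leeD.
Qed.

Lemma Rn_lift r n k x b : (0 < r)%R -> Rn d U r n r x b -> Rn d U r (n + k) r x b.
Proof.
move=> r0 h; elim: k => [|k IH]; first by rewrite addn0.
rewrite addnS /=; exists x, x; split => //; last by left.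
by rewrite daa lte_fin.
Qed.

Definition NN (r : RealR) : nat := Num.Def.archi_bound `|r|%R.

Lemma ball_Rn a b (r : RealR) : dU d U a b < r%:E -> Rn d U r (NN r) r a b.
Proof.
case/ereal_inf_lt => s p sr.
have [n [hn hR]] := path_Rn p sr (lexx r).
have s0 := path_ge0 dm p.
have r0 : (0 < r)%R by rewrite -lte_fin; apply: le_lt_trans sr.
have nN : (n <= NN r)%N.
  have h1 : (n%:R < r)%R by rewrite -lte_fin; apply: le_lt_trans sr.
  have h2 : (r < (NN r)%:R)%R.
    by apply: le_lt_trans (ler_norm r) _; apply: archi_boundP; exact: normr_ge0.
  by apply: ltnW; rewrite -(ltr_nat RealR); apply: lt_trans h1 h2.
rewrite -(subnKC nN); exact: Rn_lift.
Qed.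

Definition uinv (f : Omega -> Omega) : Omega -> Omega :=
  match pselect (exists g, cancel f g /\ cancel g f) with
  | left h => projT1 (cid h)
  | right _ => f
  end.

Lemma uinvK f : bijective f -> cancel f (uinv f).
Proof.
case=> g fg gf; rewrite /uinv; case: pselect => [h|[]]; last by exists g.
exact: (projT2 (cid h)).1.
Qed.

Definition Widx := option ({u | U u} * bool).

Definition zf (i : Omega * Widx) : Omega :=
  match i.2 with
  | None => i.1
  | Some (u, true) => sval u i.1
  | Some (u, false) => uinv (sval u) i.1
  end.

Lemma Rn_step (US : in_Sym U) r n x b : Rn d U r n.+1 r x b ->
  exists i : {y | d x y < r%:E} * Widx, Rn d U r n r (zf (sval i.1, i.2)) b.
Proof.
move=> [y [z [hy hz hR]]].
case: hz => [ez|[u [Uu [ez|ez]]]].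
- by exists (exist _ y hy, None); rewrite /zf /= -ez.
- by exists (exist _ y hy, Some (exist _ u Uu, true)); rewrite /zf /= -ez.
- exists (exist _ y hy, Some (exist _ u Uu, false)); rewrite /zf /= ez.
  by rewrite uinvK //; apply: US.
Qed.

Lemma sub_le (X : Type) (P Q : X -> Prop) :
  (forall x, P x -> Q x) -> card_le {x | P x} {x | Q x}.
Proof.
move=> PQ; exists (fun x => exist Q (sval x) (PQ _ (svalP x))).
by move=> x y /(f_equal sval) /= /sig_eq.
Qed.

Lemma Rn_lt (K : Type) (Kinf : infinite_card K) (Kreg : regular_card K)
  (US : in_Sym U) (UK : card_lt {u | U u} K) (unc : uncrowded K d) r n x :
  card_lt {b | Rn d U r n r x b} K.
Proof.
elim: n x => [|n IH] x; first exact: unc.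
have WK : card_lt Widx K.
  by apply: option_lt => //; apply: prod_lt => //; apply: bool_lt.
have IK : card_lt ({y | d x y < r%:E} * Widx) K by apply: prod_lt => //; exact: unc.
have := @union_lt K _ _ (fun i b => Rn d U r n r (zf (sval i.1, i.2)) b) Kinf Kreg IK (fun i => IH _).
move/card_lt_le; apply; apply: sub_le => b; exact: Rn_step.
Qed.

Fixpoint Lt (L W : Type) (n : nat) : Type :=
  match n with 0 => L | m.+1 => ((L * W) * Lt L W m)%type end.

Lemma Lt_lt (K L W : Type) (Kinf : infinite_card K) (Kreg : regular_card K) n :
  card_lt L K -> card_lt W K -> card_lt (Lt L W n) K.
Proof.
move=> LK WK; elim: n => [|n IH] //=.
by apply: prod_lt => //; apply: prod_lt.
Qed.

Lemma Rn_le (L : Type) (US : in_Sym U) r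
  (hL : forall a, card_le {b | Defs.ball d a r%:E b} L) n x :
  card_le {b | Rn d U r n r x b} (Lt L Widx n).
Proof.
elim: n x => [|n IH] x; first exact: hL.
apply: card_le_trans (sub_le (Rn_step US (r := r) (n := n) (x := x))) _.
apply: card_le_trans (card_le_union (fun i => IH _)) _.
case: (hL x) => [f fi].
exists (fun p => ((f p.1.1, p.1.2), p.2)) => [[[y w] l] [[y' w'] l']] /= [] /fi -> -> -> //.
Qed.
End Unc.

Lemma bounded_gen (Omega : Type) (dl : Omega -> Omega -> \bar RealR)
  (G U : set (Omega -> Omega)) :
  gen_metric dl -> is_subgroup G -> in_Sym U ->
  (forall g, G g -> bounded_perm dl g) -> (forall u, U u -> bounded_perm dl u) ->
  forall g, gen_subgroup (G `|` U) g -> bounded_perm dl g.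
Proof.
move=> dm [GS _ _ _] US hG hU g gg.
have := gg _ (bounded_subgroup dm); case => //.
by move=> h [Gh|Uh]; split; [exact: GS | exact: hG | exact: US | exact: hU].
Qed.

Lemma U_bounded (Omega : Type) (d : Omega -> Omega -> \bar RealR)
  (U : set (Omega -> Omega)) u : U u -> bounded_perm (dU d U) u.
Proof.
move=> Uu; apply: (@le_lt_trans _ _ 1); last exact: ltry.
apply: pn_le => a.
have p : path d U a (u a) (1 + 0) by apply: p_u (p_nil _ _ _); exists u; split => //; left.
by have := dU_le_path p; rewrite adde0.
Qed.

Lemma Widx_lt (Omega K : Type) (U : set (Omega -> Omega)) :
  infinite_card K -> regular_card K -> card_lt {u | U u} K -> card_lt (Widx U) K.
Proof.
by move=> Kinf Kreg UK; apply: option_lt => //; apply: prod_lt => //; apply: bool_lt.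
Qed.

Theorem theorem3p2 (Omega K : Type) :
  infinite_card Omega -> infinite_card K -> regular_card K -> card_le K Omega ->
  (* main statement, kappa-uncrowded version *)
  (forall (d : Omega -> Omega -> \bar RealR) (G : set (Omega -> Omega)),
     gen_metric d -> uncrowded K d -> is_subgroup G ->
     (forall g, G g -> bounded_perm d g) ->
     forall U : set (Omega -> Omega), in_Sym U ->
       card_lt {u : Omega -> Omega | U u} K ->
       exists d' : Omega -> Omega -> \bar RealR,
         [/\ gen_metric d', metric_le d' d, uncrowded K d',
             (forall u, U u -> bounded_perm d' u) &
             (forall g, gen_subgroup (G `|` U) g -> bounded_perm d' g)]) /\
  (* main statement, uniformly kappa-uncrowded version *)
  (forall (d : Omega -> Omega -> \bar RealR) (G : set (Omega -> Omega)),
     gen_metric d -> unif_uncrowded K d -> is_subgroup G ->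
     (forall g, G g -> bounded_perm d g) ->
     forall U : set (Omega -> Omega), in_Sym U ->
       card_lt {u : Omega -> Omega | U u} K ->
       exists d' : Omega -> Omega -> \bar RealR,
         [/\ gen_metric d', metric_le d' d, unif_uncrowded K d',
             (forall u, U u -> bounded_perm d' u) &
             (forall g, gen_subgroup (G `|` U) g -> bounded_perm d' g)]) /\
  (* consequences: inheritance along <=_kappa and ~_kappa *)
  (forall G H : set (Omega -> Omega), is_subgroup G -> is_subgroup H ->
     prec_kappa K H G ->
     (has_uncrowded_bd K G -> has_uncrowded_bd K H) /\
     (has_unif_uncrowded_bd K G -> has_unif_uncrowded_bd K H)) /\
  (forall G H : set (Omega -> Omega), is_subgroup G -> is_subgroup H ->
     approx_kappa K H G ->
     (has_uncrowded_bd K G -> has_uncrowded_bd K H) /\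
     (has_unif_uncrowded_bd K G -> has_unif_uncrowded_bd K H)).
Proof.
move=> _ Kinf Kreg _.
have common : forall (d : Omega -> Omega -> \bar RealR) (G U : set (Omega -> Omega)),
    gen_metric d -> is_subgroup G -> (forall g, G g -> bounded_perm d g) -> in_Sym U ->
    [/\ gen_metric (dU d U), metric_le (dU d U) d,
        (forall u, U u -> bounded_perm (dU d U) u) &
        (forall g, gen_subgroup (G `|` U) g -> bounded_perm (dU d U) g)].
  move=> d G U dm Gs Gb US; split.
  - exact: dU_metric.
  - by move=> a b; apply: dU_le.
  - by move=> u; apply: U_bounded.
  - apply: bounded_gen => //; first exact: dU_metric.
      by move=> g Gg; apply: bounded_le (Gb g Gg) => a b; apply: dU_le.
    by move=> u; apply: U_bounded.
have P1 : forall (d : Omega -> Omega -> \bar RealR) (G : set (Omega -> Omega)),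
     gen_metric d -> uncrowded K d -> is_subgroup G ->
     (forall g, G g -> bounded_perm d g) ->
     forall U : set (Omega -> Omega), in_Sym U ->
       card_lt {u : Omega -> Omega | U u} K ->
       exists d' : Omega -> Omega -> \bar RealR,
         [/\ gen_metric d', metric_le d' d, uncrowded K d',
             (forall u, U u -> bounded_perm d' u) &
             (forall g, gen_subgroup (G `|` U) g -> bounded_perm d' g)].
  move=> d G dm unc Gs Gb U US UK.
  have [c1 c2 c3 c4] := common d G U dm Gs Gb US.
  exists (dU d U); split => // a r.
  apply: card_lt_le (Rn_lt Kinf Kreg US UK unc r (NN r) a) _.
  apply: sub_le => b; exact: ball_Rn.
have P2 : forall (d : Omega -> Omega -> \bar RealR) (G : set (Omega -> Omega)),
     gen_metric d -> unif_uncrowded K d -> is_subgroup G ->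
     (forall g, G g -> bounded_perm d g) ->
     forall U : set (Omega -> Omega), in_Sym U ->
       card_lt {u : Omega -> Omega | U u} K ->
       exists d' : Omega -> Omega -> \bar RealR,
         [/\ gen_metric d', metric_le d' d, unif_uncrowded K d',
             (forall u, U u -> bounded_perm d' u) &
             (forall g, gen_subgroup (G `|` U) g -> bounded_perm d' g)].
  move=> d G dm unc Gs Gb U US UK.
  have [c1 c2 c3 c4] := common d G U dm Gs Gb US.
  exists (dU d U); split => // r.
  have [L [LK hL]] := unc r.
  exists (Lt L (Widx U) (NN r)); split.
    by apply: Lt_lt => //; apply: Widx_lt.
  move=> a; apply: card_le_trans (Rn_le US hL (NN r) a).
  apply: sub_le => b; exact: ball_Rn.
have P3 : forall G H : set (Omega -> Omega), is_subgroup G -> is_subgroup H ->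
     prec_kappa K H G ->
     (has_uncrowded_bd K G -> has_uncrowded_bd K H) /\
     (has_unif_uncrowded_bd K G -> has_unif_uncrowded_bd K H).
  move=> G H Gs Hs [U [US UK sub]]; split.
  - move=> [d [dm unc Gb]].
    have [d' [dm' _ unc' _ gb]] := P1 d G dm unc Gs Gb U US UK.
    by exists d'; split => // h /sub; apply: gb.
  - move=> [d [dm unc Gb]].
    have [d' [dm' _ unc' _ gb]] := P2 d G dm unc Gs Gb U US UK.
    by exists d'; split => // h /sub; apply: gb.
split => //; split => //; split => //.
by move=> G H Gs Hs [hp _]; apply: P3.
Qed.
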